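(* Let $\epsilon_{2q^*}$ be the smallest number such that $\big\|\sum_{j\in J}g_j\big\|^2\ge(1-\epsilon_{2q^*})\sum_{j\in J}\|g_j\|^2$ for all $J\subseteq\{1,\dots,q\}$ with $|J|\le 2q^*$ and all $g_j\in H_j$, $j\in J$. Then $\rho_{q^*}<1$ if and only if $\epsilon_{2q^*}<1$.
   Context: Let $q\ge1$ and let $X=(X_1,\dots,X_q)^T$ be a random vector with real-valued components. The space $L^2(\mathbb P^X)$ carries the inner product $\langle g,h\rangle=\mathbb E[g(X)h(X)]$ and norm $\|g\|=\langle g,g\rangle^{1/2}$. Let $H_q=L^2(\mathbb P^{X_q})$ and $H_j=\{h\in L^2(\mathbb P^{X_j}):\mathbb E[h(X_j)]=0\}$ for $j<q$, viewed as subspaces of $L^2(\mathbb P^X)$ via $x\mapsto h(x_j)$; for $J\subseteq\{1,\dots,q\}$ let $H_J=\sum_{j\in J}H_j$ (with $H_\emptyset=\{0\}$). Let $q^*\ge1$ be an integer. Let $\rho_{q^*}$ be the supremum of $\langle h_1,h_2\rangle/(\|h_1\|\|h_2\|)$ over all nonzero $h_1\in H_{J_1}$, $h_2\in H_{J_2}$ and all $J_1,J_2\subseteq\{1,\dots,q\}$ with $J_1\cap J_2=\emptyset$ and $|J_1|,|J_2|\le q^*$. *)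

(* Defs.v *)
From Stdlib Require Import Reals Lra List.
Import ListNotations.
Open Scope R_scope.
Set Implicit Arguments.

(* L^2(P^X) with <g,h> = E[g(X)h(X)]
   is an instance (semidefiniteness covers the a.s.-equality quotient). *)
Record IPS := {
  V :> Type;
  vzero : V;
  vadd : V -> V -> V;
  vscal : R -> V -> V;
  ip : V -> V -> R;
  vadd_assoc : forall x y z, vadd x (vadd y z) = vadd (vadd x y) z;
  vadd_comm : forall x y, vadd x y = vadd y x;
  vadd_0 : forall x, vadd vzero x = x;
  vscal_1 : forall x, vscal 1 x = x;
  vscal_assoc : forall a b x, vscal a (vscal b x) = vscal (a * b) x;
  vscal_addr : forall a x y, vscal a (vadd x y) = vadd (vscal a x) (vscal a y);
  vscal_addl : forall a b x, vscal (a + b) x = vadd (vscal a x) (vscal b x);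
  vadd_opp : forall x, vadd x (vscal (-1) x) = vzero;
  ip_sym : forall x y, ip x y = ip y x;
  ip_addl : forall x y z, ip (vadd x y) z = ip x z + ip y z;
  ip_scall : forall a x y, ip (vscal a x) y = a * ip x y;
  ip_pos : forall x, 0 <= ip x x
}.

Section Defs.
Variable E : IPS.

Definition vnorm (x : E) : R := sqrt (ip E x x).

Definition is_subspace (S : E -> Prop) : Prop :=
  S (vzero E) /\ (forall x y, S x -> S y -> S (vadd E x y)) /\
  (forall a x, S x -> S (vscal E a x)).

Definition vsum (J : list nat) (g : nat -> E) : E :=
  fold_right (fun j acc => vadd E (g j) acc) (vzero E) J.

Definition rsum (J : list nat) (f : nat -> R) : R :=
  fold_right (fun j acc => f j + acc) 0 J.

Definition admissible (q : nat) (J : list nat) (k : nat) : Prop :=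
  NoDup J /\ (forall j, In j J -> (1 <= j <= q)%nat) /\ (length J <= k)%nat.

Definition in_HJ (H : nat -> E -> Prop) (J : list nat) (h : E) : Prop :=
  exists g : nat -> E, (forall j, In j J -> H j (g j)) /\ h = vsum J g.

(* the set whose supremum is rho_{q*} *)
Definition rho_set (q qs : nat) (H : nat -> E -> Prop) (r : R) : Prop :=
  exists J1 J2 h1 h2,
    admissible q J1 qs /\ admissible q J2 qs /\
    (forall j, In j J1 -> ~ In j J2) /\
    in_HJ H J1 h1 /\ in_HJ H J2 h2 /\
    vnorm h1 <> 0 /\ vnorm h2 <> 0 /\
    r = ip E h1 h2 / (vnorm h1 * vnorm h2).

Definition rho_lt_1 (q qs : nat) (H : nat -> E -> Prop) : Prop :=
  exists c, c < 1 /\ forall r, rho_set q qs H r -> r <= c.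

Definition eps_ok (q qs : nat) (H : nat -> E -> Prop) (e : R) : Prop :=
  forall (J : list nat) (g : nat -> E),
    admissible q J (2 * qs) -> (forall j, In j J -> H j (g j)) ->
    (1 - e) * rsum J (fun j => (vnorm (g j)) ^ 2) <= (vnorm (vsum J g)) ^ 2.

(* epsilon_{2q*} < 1: the (upward closed) set of admissible e contains
   a number < 1, i.e. its smallest element is < 1 *)
Definition eps_lt_1 (q qs : nat) (H : nat -> E -> Prop) : Prop :=
  exists e, e < 1 /\ eps_ok q qs H e.

End Defs.

Arguments is_subspace {E} S.
Arguments rho_lt_1 {E} q qs H.
Arguments eps_lt_1 {E} q qs H.
Arguments rho_set {E} q qs H r.
Arguments eps_ok {E} q qs H e.
Arguments in_HJ {E} H J h.
Arguments vsum {E} J g.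
Arguments vnorm {E} x.

(* Main.v *)
Require Import Defs.
From Stdlib Require Import Reals List Lra Lia.
Import ListNotations.
Open Scope R_scope.

Section Aux.
Variable E : IPS.
Local Notation Q x := (ip E x x).

Lemma vscal0 (x : E) : vscal E 0 x = vzero E.
Proof.
  replace 0 with (1 + -1) by ring. rewrite vscal_addl, vscal_1. apply vadd_opp.
Qed.

Lemma ip0l (y : E) : ip E (vzero E) y = 0.
Proof. rewrite <- (vscal0 y), ip_scall. ring. Qed.

Lemma ip0r (y : E) : ip E y (vzero E) = 0.
Proof. rewrite ip_sym. apply ip0l. Qed.

Lemma ip_addr (x y z : E) : ip E x (vadd E y z) = ip E x y + ip E x z.
Proof. rewrite ip_sym, ip_addl, (ip_sym _ y), (ip_sym _ z). ring. Qed.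

Lemma ip_scalr a (x y : E) : ip E x (vscal E a y) = a * ip E x y.
Proof. rewrite ip_sym, ip_scall, ip_sym. ring. Qed.

Lemma Qadd (a b : E) : Q (vadd E a b) = Q a + 2 * ip E a b + Q b.
Proof. rewrite ip_addl, !ip_addr, (ip_sym _ b a). ring. Qed.

Lemma Qscal s (x : E) : Q (vscal E s x) = s * s * Q x.
Proof. rewrite ip_scall, ip_scalr. ring. Qed.

Lemma vscal_zero a : vscal E a (vzero E) = vzero E.
Proof.
  rewrite <- (vscal0 (vzero E)), vscal_assoc. rewrite Rmult_0_r. reflexivity.
Qed.

Lemma vsum_scal a (J : list nat) (g : nat -> E) :
  vsum J (fun j => vscal E a (g j)) = vscal E a (vsum J g).
Proof.
  induction J as [|j J IH]; simpl.
  - now rewrite vscal_zero.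
  - rewrite vscal_addr. f_equal. exact IH.
Qed.

Lemma vsum_ext (J : list nat) (g g' : nat -> E) :
  (forall j, In j J -> g j = g' j) -> vsum J g = vsum J g'.
Proof.
  induction J as [|j J IH]; simpl; intros Hg; auto.
  rewrite Hg by auto. f_equal. apply IH. auto.
Qed.

Lemma rsum_ext (J : list nat) (f f' : nat -> R) :
  (forall j, In j J -> f j = f' j) -> rsum J f = rsum J f'.
Proof.
  induction J as [|j J IH]; simpl; intros Hg; auto.
  rewrite Hg by auto. f_equal. apply IH. auto.
Qed.

Lemma vsum_app (A B : list nat) (g : nat -> E) :
  vsum (A ++ B) g = vadd E (vsum A g) (vsum B g).
Proof.
  induction A as [|j A IH]; simpl.
  - now rewrite vadd_0.
  - rewrite IH. apply vadd_assoc.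
Qed.

Lemma rsum_app (A B : list nat) f : rsum (A ++ B) f = rsum A f + rsum B f.
Proof. induction A as [|j A IH]; simpl; [ring| rewrite IH; ring]. Qed.

Lemma rsum_nonneg (J : list nat) f : (forall j, 0 <= f j) -> 0 <= rsum J f.
Proof. intros Hf; induction J; simpl; [lra| specialize (Hf a); lra]. Qed.

Lemma rsum_scal a (J : list nat) f : rsum J (fun j => a * f j) = a * rsum J f.
Proof. induction J as [|j J IH]; simpl; [ring| rewrite IH; ring]. Qed.

Lemma weighted (a b : E) s : 0 < s -> 2 * ip E a b <= s * Q a + Q b / s.
Proof.
  intros Hs.
  assert (H0 := ip_pos E (vadd E (vscal E s a) (vscal E (-1) b))).
  rewrite Qadd, !Qscal, ip_scall, ip_scalr in H0.
  assert (Hinv : s * / s = 1) by (field; lra).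
  assert (0 < / s) by (apply Rinv_0_lt_compat; lra).
  unfold Rdiv.
  apply Rmult_le_reg_l with s; [lra|].
  replace (s * (s * Q a + Q b * / s)) with (s * s * Q a + Q b * (s * / s)) by ring.
  rewrite Hinv. lra.
Qed.

Lemma Qzero_orth (a b : E) : Q a = 0 -> ip E a b = 0.
Proof.
  intros Ha.
  destruct (Req_dec (ip E a b) 0) as [|Hne]; auto. exfalso.
  set (x := ip E a b). set (y := Q b).
  assert (Hy : 0 <= y) by apply ip_pos.
  set (t := - x / (y + 1)).
  assert (H0 := ip_pos E (vadd E a (vscal E t b))).
  rewrite Qadd, Qscal, ip_scalr, Ha in H0. fold x y in H0.
  unfold t in H0.
  assert (Hx : 0 < x * x) by (destruct (Rtotal_order x 0) as [h|[h|h]]; [nra|contradiction|nra]).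
  assert (Hp : 0 < y + 1) by lra.
  replace (0 + 2 * (- x / (y + 1) * x) + - x / (y + 1) * (- x / (y + 1)) * y)
    with (x * x * (- y - 2) / ((y + 1) * (y + 1))) in H0 by (field; lra).
  assert (0 < (y+1)*(y+1)) by nra.
  assert (x * x * (- y - 2) < 0) by nra.
  assert (x * x * (- y - 2) / ((y + 1) * (y + 1)) < 0).
  { unfold Rdiv. apply Rmult_neg_pos; auto. apply Rinv_0_lt_compat; auto. }
  lra.
Qed.

Lemma upper (J : list nat) (g : nat -> E) :
  Q (vsum J g) <= INR (length J) * rsum J (fun j => Q (g j)).
Proof.
  induction J as [|j J IH].
  - simpl. rewrite ip0l. lra.
  - change (vsum (j :: J) g) with (vadd E (g j) (vsum J g)).
    change (rsum (j :: J) (fun j => Q (g j))) with (Q (g j) + rsum J (fun j => Q (g j))).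
    change (length (j :: J)) with (S (length J)).
    rewrite Qadd.
    assert (HR := rsum_nonneg J (fun j => Q (g j)) (fun j => ip_pos E (g j))).
    assert (Hg := ip_pos E (g j)).
    destruct J as [|k J'].
    + simpl. rewrite ip0r, ip0l. lra.
    + set (n := INR (length (k :: J'))) in *.
      assert (Hn : 0 < n) by (unfold n; simpl length; apply lt_0_INR; lia).
      assert (Hw := weighted (g j) (vsum (k :: J') g) n Hn).
      rewrite S_INR. fold n.
      set (R0 := rsum (k :: J') (fun j => Q (g j))) in *.
      set (S := Q (vsum (k :: J') g)) in *.
      assert (S / n <= R0).
      { unfold Rdiv. apply Rmult_le_reg_l with n; [lra|].
        replace (n * (S * / n)) with S by (field; lra). lra. }
      nra.
Qed.

Lemma vnorm_sq (x : E) : vnorm x ^ 2 = Q x.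
Proof. unfold vnorm. rewrite pow2_sqrt; auto. apply ip_pos. Qed.

End Aux.

Lemma NoDup_app_disj (A B : list nat) a : NoDup (A ++ B) -> In a A -> ~ In a B.
Proof.
  induction A as [|x A IH]; simpl; intros Hn Ha; [contradiction|].
  inversion Hn as [|? ? Hx Hn']; subst.
  destruct Ha as [<-|Ha].
  - intros Hb. apply Hx. apply in_or_app. auto.
  - auto.
Qed.

Lemma pow_le1 x n m : 0 <= x <= 1 -> (n <= m)%nat -> x ^ m <= x ^ n.
Proof.
  intros Hx Hnm. induction Hnm; [lra|].
  simpl. assert (0 <= x ^ m) by (apply pow_le; lra). nra.
Qed.

Section Main.
Variable E : IPS.
Local Notation Q x := (ip E x x).
Variables (q qs : nat) (H : nat -> E -> Prop).
Hypothesis hqs : (1 <= qs)%nat.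
Hypothesis hH : forall j, (1 <= j <= q)%nat -> is_subspace (H j).

Lemma in_HJ_scal J h a : admissible q J qs -> in_HJ H J h -> in_HJ H J (vscal E a h).
Proof.
  intros [_ [Hr _]] [g [Hg ->]].
  exists (fun j => vscal E a (g j)). split.
  - intros j Hj. destruct (hH j (Hr j Hj)) as [_ [_ Hs]]. apply Hs. auto.
  - symmetry. apply vsum_scal.
Qed.

Definition pairP (c0 : R) := forall J1 J2 h1 h2,
  admissible q J1 qs -> admissible q J2 qs -> (forall j, In j J1 -> ~ In j J2) ->
  in_HJ H J1 h1 -> in_HJ H J2 h2 -> (1 - c0) * (Q h1 + Q h2) <= Q (vadd E h1 h2).

Lemma pair_from_rho c0 : 0 <= c0 -> (forall r, rho_set q qs H r -> r <= c0) -> pairP c0.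
Proof.
  intros Hc0 Hrho J1 J2 h1 h2 A1 A2 D I1 I2.
  rewrite Qadd.
  assert (P1 := ip_pos E h1). assert (P2 := ip_pos E h2).
  set (n1 := vnorm h1). set (n2 := vnorm h2).
  assert (N1 : n1 * n1 = Q h1) by (rewrite <- vnorm_sq; unfold n1; ring).
  assert (N2 : n2 * n2 = Q h2) by (rewrite <- vnorm_sq; unfold n2; ring).
  assert (G1 : 0 <= n1) by apply sqrt_pos. assert (G2 : 0 <= n2) by apply sqrt_pos.
  assert (Hb : - (c0 * n1 * n2) <= ip E h1 h2 <= c0 * n1 * n2).
  { destruct (Req_dec n1 0) as [Z1|Z1].
    - rewrite Qzero_orth by nra. split; nra.
    - destruct (Req_dec n2 0) as [Z2|Z2].
      + rewrite ip_sym, Qzero_orth by nra. split; nra.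
      + assert (Pn : 0 < n1 * n2) by (apply Rmult_lt_0_compat; lra).
        assert (R1 : ip E h1 h2 / (n1 * n2) <= c0).
        { apply Hrho. exists J1, J2, h1, h2. exact (conj A1 (conj A2 (conj D (conj I1 (conj I2 (conj Z1 (conj Z2 eq_refl))))))). }
        assert (R2 : ip E h1 (vscal E (-1) h2) / (n1 * vnorm (vscal E (-1) h2)) <= c0).
        { apply Hrho. exists J1, J2, h1, (vscal E (-1) h2).
          assert (vnorm (vscal E (-1) h2) = n2).
          { unfold n2, vnorm. rewrite Qscal. f_equal. ring. }
          refine (conj A1 (conj A2 (conj D (conj I1 (conj _ (conj Z1 (conj _ eq_refl))))))).
          - apply in_HJ_scal; auto.
          - congruence. }
        assert (vnorm (vscal E (-1) h2) = n2).
        { unfold n2, vnorm. rewrite Qscal. f_equal. ring. }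
        rewrite H0, ip_scalr in R2.
        assert (S1 : ip E h1 h2 <= c0 * (n1 * n2)).
        { unfold Rdiv in R1. apply Rmult_le_reg_r with (/ (n1 * n2)).
          apply Rinv_0_lt_compat; auto.
          replace (c0 * (n1 * n2) * / (n1 * n2)) with c0 by (field; lra). lra. }
        assert (S2 : - ip E h1 h2 <= c0 * (n1 * n2)).
        { unfold Rdiv in R2. apply Rmult_le_reg_r with (/ (n1 * n2)).
          apply Rinv_0_lt_compat; auto.
          replace (c0 * (n1 * n2) * / (n1 * n2)) with c0 by (field; lra). lra. }
        split; lra. }
  assert (Hs0 := Rle_0_sqr (n1 - n2)). unfold Rsqr in Hs0.
  assert (Hs : 2 * n1 * n2 <= n1 * n1 + n2 * n2) by lra.
  assert (c0 * (2 * n1 * n2) <= c0 * (n1 * n1 + n2 * n2)) by (apply Rmult_le_compat_l; lra).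
  rewrite <- N1, <- N2. lra.
Qed.

Lemma lower_k c0 : 0 <= c0 < 1 -> pairP c0 ->
  forall J g, NoDup J -> (forall j, In j J -> (1 <= j <= q)%nat) -> (length J <= qs)%nat ->
  (forall j, In j J -> H j (g j)) ->
  (1 - c0) ^ (length J) * rsum J (fun j => Q (g j)) <= Q (vsum J g).
Proof.
  intros Hc Hp J g. induction J as [|j J IH]; intros Hn Hr Hl Hg.
  - simpl. rewrite ip0l. lra.
  - inversion Hn as [|? ? Hj Hn']; subst.
    change (vsum (j :: J) g) with (vadd E (g j) (vsum J g)).
    change (rsum (j :: J) (fun j => Q (g j))) with (Q (g j) + rsum J (fun j => Q (g j))).
    change (length (j :: J)) with (S (length J)).
    assert (IH' := IH Hn' (fun k Hk => Hr k (or_intror Hk)) ltac:(simpl in Hl; lia)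
                     (fun k Hk => Hg k (or_intror Hk))).
    assert (Hpj := Hp [j] J (g j) (vsum J g)).
    assert (Hq : (1 - c0) * (Q (g j) + Q (vsum J g)) <= Q (vadd E (g j) (vsum J g))).
    { apply Hpj.
      - split; [constructor; [simpl; tauto| constructor]|].
        split; [intros k [<-|[]]; apply Hr; simpl; auto| simpl; lia].
      - split; [auto|]. split; [intros k Hk; apply Hr; simpl; auto| simpl in Hl; lia].
      - intros k [<-|[]]; auto.
      - exists g. split; [intros k [<-|[]]; apply Hg; simpl; auto|].
        simpl. rewrite vadd_comm, vadd_0. reflexivity.
      - exists g. split; [intros k Hk; apply Hg; simpl; auto| reflexivity]. }
    simpl pow.
    assert (0 <= (1 - c0) ^ length J) by (apply pow_le; lra).
    assert ((1 - c0) ^ length J <= 1).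
    { replace 1 with ((1 - c0) ^ 0) by (simpl; ring). apply pow_le1; [lra|lia]. }
    assert (Hg0 := ip_pos E (g j)).
    set (p := (1 - c0) ^ length J) in *.
    assert (p * Q (g j) <= Q (g j)) by nra.
    assert (p * Q (g j) + p * rsum J (fun j => Q (g j)) <= Q (g j) + Q (vsum J g)) by lra.
    assert ((1 - c0) * (p * Q (g j) + p * rsum J (fun j => Q (g j))) <= (1 - c0) * (Q (g j) + Q (vsum J g)))
      by (apply Rmult_le_compat_l; lra).
    lra.
Qed.

End Main.

Theorem lemma2 (E : IPS) (q qs : nat) (H : nat -> E -> Prop)
  (hq : (1 <= q)%nat) (hqs : (1 <= qs)%nat)
  (hH : forall j, (1 <= j <= q)%nat -> is_subspace (H j)) :
  rho_lt_1 q qs H <-> eps_lt_1 q qs H.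
Proof.
  split.
  - intros [c [Hc Hb]].
    set (c0 := Rmax c 0).
    assert (Hc0 : 0 <= c0 < 1) by (unfold c0; split; [apply Rmax_r| apply Rmax_lub_lt; lra]).
    assert (Hb' : forall r, rho_set q qs H r -> r <= c0).
    { intros r Hr. apply Rle_trans with c; [auto| apply Rmax_l]. }
    assert (Hp := pair_from_rho E q qs H hH c0 (proj1 Hc0) Hb').
    set (p := 1 - c0) in *.
    exists (1 - p * p ^ qs). split.
    { assert (0 < p ^ qs) by (apply pow_lt; unfold p; lra). unfold p in *. nra. }
    intros J g [Hn [Hr Hl]] Hg.
    rewrite vnorm_sq.
    rewrite (rsum_ext J _ (fun j => ip E (g j) (g j))) by (intros; apply vnorm_sq).
    assert (HJ := firstn_skipn qs J).
    assert (LA : (length (firstn qs J) <= qs)%nat) by apply firstn_le_length.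
    assert (LB : (length (skipn qs J) <= qs)%nat) by (rewrite length_skipn; lia).
    rewrite <- HJ in Hn, Hr, Hg |- *.
    set (A := firstn qs J) in *. set (B := skipn qs J) in *.
    assert (NA := NoDup_app_remove_r _ _ Hn). assert (NB := NoDup_app_remove_l _ _ Hn).
    assert (RA : forall j, In j A -> (1 <= j <= q)%nat) by (intros; apply Hr, in_or_app; auto).
    assert (RB : forall j, In j B -> (1 <= j <= q)%nat) by (intros; apply Hr, in_or_app; auto).
    assert (GA : forall j, In j A -> H j (g j)) by (intros; apply Hg, in_or_app; auto).
    assert (GB : forall j, In j B -> H j (g j)) by (intros; apply Hg, in_or_app; auto).
    rewrite vsum_app, rsum_app.
    assert (H1 := Hp A B (vsum A g) (vsum B g) (conj NA (conj RA LA)) (conj NB (conj RB LB))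
                  (fun j Hj => NoDup_app_disj _ _ _ Hn Hj)
                  (ex_intro _ g (conj GA eq_refl)) (ex_intro _ g (conj GB eq_refl))).
    assert (LkA := lower_k E q qs H hqs c0 Hc0 Hp A g NA RA LA GA).
    assert (LkB := lower_k E q qs H hqs c0 Hc0 Hp B g NB RB LB GB).
    change (1 - c0) with p in LkA, LkB, H1.
    assert (Pp : 0 <= p <= 1) by (unfold p; lra).
    assert (PA : p ^ qs <= p ^ length A) by (apply pow_le1; auto).
    assert (PB : p ^ qs <= p ^ length B) by (apply pow_le1; auto).
    assert (SA := rsum_nonneg A (fun j => ip E (g j) (g j)) (fun j => ip_pos E (g j))).
    assert (SB := rsum_nonneg B (fun j => ip E (g j) (g j)) (fun j => ip_pos E (g j))).
    set (rA := rsum A (fun j => ip E (g j) (g j))) in *.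
    set (rB := rsum B (fun j => ip E (g j) (g j))) in *.
    assert (p ^ qs * rA <= p ^ length A * rA) by (apply Rmult_le_compat_r; auto).
    assert (p ^ qs * rB <= p ^ length B * rB) by (apply Rmult_le_compat_r; auto).
    assert (p * (p ^ qs * rA + p ^ qs * rB) <=
            p * (ip E (vsum A g) (vsum A g) + ip E (vsum B g) (vsum B g)))
      by (apply Rmult_le_compat_l; lra).
    replace (1 - (1 - p * p ^ qs)) with (p * p ^ qs) by ring.
    lra.
  - intros [e [He Hok]].
    set (a := 1 - e).
    assert (Ha : 0 < a) by (unfold a; lra).
    assert (Hq0 : 0 < INR qs) by (apply lt_0_INR; lia).
    exists (1 - a / INR qs). split.
    { assert (0 < a / INR qs) by (apply Rdiv_lt_0_compat; auto). lra. }
    intros r [J1 [J2 [h1 [h2 [A1 [A2 [D [[g1 [G1 E1]] [[g2 [G2 E2]] [Z1 [Z2 Er]]]]]]]]]]].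
    set (n1 := vnorm h1) in *. set (n2 := vnorm h2) in *.
    assert (N1 : n1 * n1 = ip E h1 h1) by (rewrite <- vnorm_sq; unfold n1; ring).
    assert (N2 : n2 * n2 = ip E h2 h2) by (rewrite <- vnorm_sq; unfold n2; ring).
    assert (Q1 : 0 < n1 * n1).
    { assert (0 <= n1) by apply sqrt_pos. assert (0 < n1) by lra. nra. }
    assert (Q2 : 0 < n2 * n2).
    { assert (0 <= n2) by apply sqrt_pos. assert (0 < n2) by lra. nra. }
    set (s1 := / n1). set (s2 := - / n2).
    set (g := fun j => if in_dec Nat.eq_dec j J1 then vscal E s1 (g1 j) else vscal E s2 (g2 j)).
    destruct A1 as [Nd1 [Rg1 L1]]. destruct A2 as [Nd2 [Rg2 L2]].
    assert (AJ : admissible q (J1 ++ J2) (2 * qs)).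
    { split; [apply NoDup_app; auto|]. split.
      - intros j Hj. apply in_app_or in Hj. destruct Hj; auto.
      - rewrite length_app. lia. }
    assert (Hg : forall j, In j (J1 ++ J2) -> H j (g j)).
    { intros j Hj. unfold g. destruct (in_dec Nat.eq_dec j J1) as [i|ni].
      - destruct (hH j (Rg1 j i)) as [_ [_ Hs]]. apply Hs, G1, i.
      - apply in_app_or in Hj. destruct Hj as [Hj|Hj]; [contradiction|].
        destruct (hH j (Rg2 j Hj)) as [_ [_ Hs]]. apply Hs, G2, Hj. }
    assert (Ho := Hok _ _ AJ Hg).
    rewrite vnorm_sq, vsum_app, rsum_app in Ho.
    rewrite (vsum_ext E J1 g (fun j => vscal E s1 (g1 j))) in Ho
      by (intros j Hj; unfold g; destruct (in_dec Nat.eq_dec j J1); tauto).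
    rewrite (vsum_ext E J2 g (fun j => vscal E s2 (g2 j))) in Ho
      by (intros j Hj; unfold g; destruct (in_dec Nat.eq_dec j J1) as [i|]; [exfalso; exact (D j i Hj)| reflexivity]).
    rewrite (rsum_ext J1 _ (fun j => s1 * s1 * ip E (g1 j) (g1 j))) in Ho
      by (intros j Hj; unfold g; destruct (in_dec Nat.eq_dec j J1); [|tauto];
          rewrite vnorm_sq, Qscal; reflexivity).
    rewrite (rsum_ext J2 _ (fun j => s2 * s2 * ip E (g2 j) (g2 j))) in Ho
      by (intros j Hj; unfold g; destruct (in_dec Nat.eq_dec j J1) as [i|];
          [exfalso; exact (D j i Hj)| rewrite vnorm_sq, Qscal; reflexivity]).
    rewrite !vsum_scal, !rsum_scal, <- E1, <- E2 in Ho.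
    rewrite Qadd, !Qscal, ip_scall, ip_scalr in Ho.
    assert (U1 := upper E J1 g1). assert (U2 := upper E J2 g2).
    rewrite <- E1 in U1. rewrite <- E2 in U2.
    assert (S1 := rsum_nonneg J1 (fun j => ip E (g1 j) (g1 j)) (fun j => ip_pos E (g1 j))).
    assert (S2 := rsum_nonneg J2 (fun j => ip E (g2 j) (g2 j)) (fun j => ip_pos E (g2 j))).
    set (R1 := rsum J1 (fun j => ip E (g1 j) (g1 j))) in *.
    set (R2 := rsum J2 (fun j => ip E (g2 j) (g2 j))) in *.
    assert (I1 : INR (length J1) <= INR qs) by (apply le_INR; auto).
    assert (I2 : INR (length J2) <= INR qs) by (apply le_INR; auto).
    assert (T1 : n1 * n1 <= INR qs * R1).
    { assert (INR (length J1) * R1 <= INR qs * R1) by (apply Rmult_le_compat_r; auto). lra. }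
    assert (T2 : n2 * n2 <= INR qs * R2).
    { assert (INR (length J2) * R2 <= INR qs * R2) by (apply Rmult_le_compat_r; auto). lra. }
    assert (K1 : s1 * s1 * (n1 * n1) = 1) by (unfold s1; field; nra).
    assert (K2 : s2 * s2 * (n2 * n2) = 1) by (unfold s2; field; nra).
    assert (P1 : 0 <= s1 * s1) by nra. assert (P2 : 0 <= s2 * s2) by nra.
    assert (X1 : 1 <= INR qs * (s1 * s1 * R1)).
    { assert (s1 * s1 * (n1 * n1) <= s1 * s1 * (INR qs * R1)) by (apply Rmult_le_compat_l; auto). lra. }
    assert (X2 : 1 <= INR qs * (s2 * s2 * R2)).
    { assert (s2 * s2 * (n2 * n2) <= s2 * s2 * (INR qs * R2)) by (apply Rmult_le_compat_l; auto). lra. }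
    assert (Y1 : / INR qs <= s1 * s1 * R1).
    { apply Rmult_le_reg_l with (INR qs); auto. rewrite Rinv_r; lra. }
    assert (Y2 : / INR qs <= s2 * s2 * R2).
    { apply Rmult_le_reg_l with (INR qs); auto. rewrite Rinv_r; lra. }
    assert (Hr2 : 2 * (s1 * (s2 * ip E h1 h2)) = - 2 * r).
    { rewrite Er. unfold s1, s2. field. split; auto. }
    rewrite <- N1, <- N2, K1, K2, Hr2 in Ho.
    fold a in Ho.
    assert (a * (/ INR qs + / INR qs) <= a * (s1 * s1 * R1 + s2 * s2 * R2))
      by (apply Rmult_le_compat_l; lra).
    unfold Rdiv. lra.
Qed.
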